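(* Let $S$ be a minimal zero-sum sequence over $\mathbb{Z}$ with $|S|$ finite and $|S|>1$. Suppose $S=S^+\cdot S^-$ where \[S^+=\prod_{i=1}^n a_i^{[x_i]},\qquad S^-=\prod_{j=1}^m (-b_j)^{[y_j]},\] with positive integers $a_1\le \dots\le a_n$, $b_1\le\dots\le b_m$, and positive integers $x_i$ ($i\in[1,n]$), $y_j$ ($j\in[1,m]$). Then \[|S^+|\le \left\lfloor -S^-_{\rm av}\right\rfloor=\left\lfloor \frac{\sum_{j=1}^m b_j y_j}{\sum_{j=1}^m y_j}\right\rfloor \quad\text{and}\quad |S^-|\le \left\lfloor S^+_{\rm av}\right\rfloor=\left\lfloor \frac{\sum_{i=1}^n a_i x_i}{\sum_{i=1}^n x_i}\right\rfloor.\]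
   Context: A sequence over a subset $G_0$ of an abelian group is a finite unordered sequence (multiset) of elements of $G_0$; the product $R\cdot T$ denotes concatenation, and $R$, $T$ are then called subsequences of $R\cdot T$. For $g$ and an integer $d\ge 0$, $g^{[d]}$ denotes the sequence consisting of $d$ copies of $g$. For $S=s_1\cdot\ldots\cdot s_t$: $|S|=t$ is its length, $\sigma(S)=s_1+\dots+s_t$ its sum, and $S_{\rm av}=\sigma(S)/|S|$ its average. $S$ is a zero-sum sequence if $\sigma(S)=0$, and a minimal zero-sum sequence if it is a nontrivial zero-sum sequence containing no proper nontrivial zero-sum subsequence. $[x,y]=\{i\in\mathbb{Z}: x\le i\le y\}$. *)

(* Defs.v *)
From mathcomp Require Import all_boot all_order all_algebra.
Set Implicit Arguments. Unset Strict Implicit. Unset Printing Implicit Defensive.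
Import GRing.Theory Num.Theory.
Local Open Scope ring_scope.

(* A sequence over Z is modelled as a list of integers (order irrelevant);
   its subsequences are the sub-multisets, i.e. [mask bs S] for bitmasks bs. *)
Definition seq_sum (S : seq int) : int := \sum_(s <- S) s.

Definition zero_sum (S : seq int) : Prop := seq_sum S = 0.

Definition minimal_zero_sum (S : seq int) : Prop :=
  [/\ S != [::], zero_sum S &
      forall bs : bitseq, zero_sum (mask bs S) ->
        size (mask bs S) = 0%N \/ size (mask bs S) = size S].

Definition seq_prod (k : nat) (c : nat -> int) (d : nat -> nat) : seq int :=
  flatten [seq nseq (d i) (c i) | i <- iota 0 k].

(* Main.v *)
Require Import Defs.
From mathcomp Require Import all_boot all_order all_algebra zify ring.
Import GRing.Theory Num.Theory.
Local Open Scope ring_scope.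

Lemma sum_mask (s : seq int) (al : nat -> bool) :
  seq_sum (mask (mkseq al (size s)) s) = \sum_(i < size s | al i) s`_i.
Proof.
rewrite /seq_sum big_mask; apply: eq_big => i.
  by rewrite nth_mkseq // andbT.
by rewrite (tnth_nth 0).
Qed.

Lemma sum_nth (s : seq int) : seq_sum s = \sum_(i < size s) s`_i.
Proof. by rewrite /seq_sum big_tnth; apply: eq_bigr => i _; rewrite (tnth_nth 0). Qed.

Lemma seq_sum_cat s1 s2 : seq_sum (s1 ++ s2) = seq_sum s1 + seq_sum s2.
Proof. by rewrite /seq_sum big_cat. Qed.

Lemma count_mkseq (al : nat -> bool) n : count id (mkseq al n) = count al (iota 0 n).
Proof. by rewrite /mkseq count_map. Qed.

Lemma L (Sp Sn : seq int) (al be : nat -> bool) :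
  minimal_zero_sum (Sp ++ Sn) ->
  \sum_(i < size Sp | al i) Sp`_i + \sum_(j < size Sn | be j) Sn`_j = 0 ->
  ((forall i, (i < size Sp)%N -> al i = false) /\ (forall j, (j < size Sn)%N -> be j = false))
  \/ (forall i, (i < size Sp)%N -> al i).
Proof.
case=> _ _ /(_ (mkseq al (size Sp) ++ mkseq be (size Sn))).
rewrite mask_cat ?size_mkseq // /zero_sum seq_sum_cat !sum_mask => H /H.
rewrite size_cat !size_mask ?size_mkseq // !count_mkseq size_cat.
case=> [/eqP|] h.
  rewrite addn_eq0 in h; case/andP: h => /eqP h1 /eqP h2.
  left; split=> i hi; apply/negbTE/negP => hai.
    have : has al (iota 0 (size Sp)) by apply/hasP; exists i; rewrite ?mem_iota.
    by rewrite has_count h1.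
  have : has be (iota 0 (size Sn)) by apply/hasP; exists i; rewrite ?mem_iota.
  by rewrite has_count h2.
right=> i hi.
have c1 := count_size al (iota 0 (size Sp)).
have c2 := count_size be (iota 0 (size Sn)).
rewrite !size_iota in c1 c2.
have : all al (iota 0 (size Sp)) by rewrite all_count size_iota; apply/eqP; lia.
by move/allP; apply; rewrite mem_iota.
Qed.

Definition cyc (k k' : nat) (i : nat) : bool :=
  if (k <= k')%N then (k <= i)%N && (i < k')%N else (k <= i)%N || (i < k')%N.

Lemma seg_sum n (f : nat -> int) k k' : (k <= k')%N ->
  \sum_(i < n | (k <= i)%N && (i < k')%N) f i =
  \sum_(i < n | (i < k')%N) f i - \sum_(i < n | (i < k)%N) f i.
Proof.
move=> h.
rewrite [X in _ = X - _](bigID (fun i : 'I_n => (i < k)%N)) /=.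
have -> : \sum_(i < n | (i < k')%N && (i < k)%N) f i = \sum_(i < n | (i < k)%N) f i.
  by apply: eq_bigl => i; apply/idP/idP; lia.
rewrite addrC addrK; apply: eq_bigl => i; apply/idP/idP; lia.
Qed.

Lemma cyc_sum n (f : nat -> int) k k' :
  \sum_(i < n | cyc k k' i) f i =
  \sum_(i < n | (i < k')%N) f i - \sum_(i < n | (i < k)%N) f i
  + (if (k <= k')%N then 0 else \sum_(i < n) f i).
Proof.
rewrite /cyc; case: leqP => h.
  by rewrite addr0 seg_sum.
rewrite [X in _ = _ + X](bigID (fun i : 'I_n => (k <= i)%N || (i < k')%N)) /=.
have -> : \sum_(i < n | ~~ ((k <= i)%N || (i < k')%N)) f i =
          \sum_(i < n | (k' <= i)%N && (i < k)%N) f i.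
  by apply: eq_bigl => i; apply/idP/idP; lia.
rewrite seg_sum ?(ltnW h) //.
set A := \sum_(i < n | _) _; set B := \sum_(i < n | _) _; set C := \sum_(i < n | _) _; lia.
Qed.

Lemma cyc_self k k' : cyc k k' k = false -> k = k'.
Proof. rewrite /cyc; case: (leqP k k') => h /=; rewrite leqnn //=; lia. Qed.

Lemma cyc_r k k' : cyc k k' k' = false.
Proof. rewrite /cyc; case: (leqP k k') => h; rewrite ltnn ?andbF ?orbF //; apply/negbTE; lia. Qed.

Lemma cyc_bound n (f : nat -> int) k k' : (k' < n)%N ->
  (forall i, (i < n)%N -> 0 < f i) ->
  0 <= \sum_(i < n | cyc k k' i) f i < \sum_(i < n) f i.
Proof.
move=> hk hf; apply/andP; split.
  by apply: sumr_ge0 => i _; apply: Order.POrderTheory.ltW; apply: hf.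
rewrite [X in _ < X](bigID (fun i : 'I_n => cyc k k' i)) /=.
rewrite [X in _ < _ + X](bigD1 (Ordinal hk)) /= ?cyc_r //.
have h1 : 0 <= \sum_(i < n | ~~ cyc k k' i && (i != Ordinal hk)) f i.
  by apply: sumr_ge0 => i _; apply: Order.POrderTheory.ltW; apply: hf.
have h2 := hf _ hk.
rewrite ltrDl; apply: (Order.POrderTheory.lt_le_trans h2); rewrite lerDl; exact: h1.
Qed.

Lemma key (Sp Sn : seq int) : all (fun z => 0 < z) Sp -> all (fun z => z < 0) Sn ->
  minimal_zero_sum (Sp ++ Sn) -> (0 < size Sp)%N ->
  (size Sp * size Sn)%:Z <= seq_sum Sp.
Proof.
move=> /allP hSp /allP hSn hmin hX.
have hp : forall i, (i < size Sp)%N -> 0 < Sp`_i by move=> i hi; apply: hSp; apply: mem_nth.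
have hq : forall j, (j < size Sn)%N -> 0 < - Sn`_j.
  by move=> j hj; rewrite oppr_gt0; apply: hSn; apply: mem_nth.
have hz := hmin; case: hz => _ hz _.
move: hz; rewrite /zero_sum seq_sum_cat !sum_nth => hz.
have hQ : \sum_(j < size Sn) - Sn`_j = \sum_(i < size Sp) Sp`_i.
  by move/eqP: hz; rewrite addr_eq0 => /eqP ->; rewrite sumrN.
pose P := \sum_(i < size Sp) Sp`_i.
have hP : 0 < P.
  by have /andP[h1 h2] := cyc_bound _ (fun i => Sp`_i) 0 0 hX hp; exact: Order.POrderTheory.le_lt_trans h1 h2.
pose ps k := \sum_(i < size Sp | (i < k)%N) Sp`_i.
pose qs l := \sum_(j < size Sn | (j < l)%N) - Sn`_j.
pose h (kl : 'I_(size Sp) * 'I_(size Sn)) := absz ((ps kl.1 - qs kl.2) %% P)%Z.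
have hPn : (absz P).-1.+1 = absz P by apply: prednK; lia.
have hlt : forall kl, (h kl < (absz P).-1.+1)%N.
  move=> kl; rewrite hPn /h.
  have := ltz_pmod (ps kl.1 - qs kl.2) hP.
  have := modz_ge0 (ps kl.1 - qs kl.2) (lt0r_neq0 hP).
  lia.
pose g kl : 'I_((absz P).-1.+1) := inord (h kl).
have ginj : injective g.
  move=> [k l] [k' l'] /(congr1 val); rewrite /g /= !inordK ?hlt // /h /= => e.
  have e' : ((ps k - qs l) %% P)%Z = ((ps k' - qs l') %% P)%Z.
    move/(congr1 Posz): e; rewrite !gez0_abs //; apply: modz_ge0; exact: lt0r_neq0.
  have /dvdzP [c hc] : (P %| (ps k - qs l) - (ps k' - qs l'))%Z by rewrite -eqz_mod_dvd; apply/eqP.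
  pose A := \sum_(i < size Sp | cyc k k' i) Sp`_i.
  pose B := \sum_(j < size Sn | cyc l l' j) - Sn`_j.
  have [cA hA] : exists cA : int, A = ps k' - ps k + cA * P.
    rewrite /A cyc_sum; case: ifP => _; [exists 0 | exists 1]; by rewrite ?mul0r ?mul1r.
  have [cB hB] : exists cB : int, B = qs l' - qs l + cB * P.
    rewrite /B (cyc_sum _ (fun j => - Sn`_j)) /= hQ; case: ifP => _; [exists 0 | exists 1]; by rewrite ?mul0r ?mul1r.
  have /andP[hA1 hA2] := cyc_bound _ (fun i => Sp`_i) k _ (ltn_ord k') hp.
  have /andP[hB1 hB2] := cyc_bound _ (fun j => - Sn`_j) l _ (ltn_ord l') hq.
  rewrite -/A -/P in hA1 hA2; rewrite -/B hQ -/P in hB1 hB2.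
  have hAB : A = B.
    have hd : A - B = (cA - cB - c) * P by rewrite hA hB; lia.
    move: hd; set d := cA - cB - c; move=> hd.
    have hPge : 0 <= P := Order.POrderTheory.ltW hP.
    have [hd0|[hd1|hd2]] : d = 0 \/ 1 <= d \/ d <= -1 by lia.
    - by move: hd; rewrite hd0 mul0r; lia.
    - have := ler_wpM2r hPge hd1; rewrite mul1r -hd; lia.
    - have := ler_wpM2r hPge hd2; rewrite mulN1r -hd; lia.
  have hs : \sum_(i < size Sp | cyc k k' i) Sp`_i + \sum_(j < size Sn | cyc l l' j) Sn`_j = 0.
    by move/eqP: hAB; rewrite /A /B sumrN -addr_eq0 => /eqP.
  case: (L _ _ _ _ hmin hs) => [[h1 h2] | h1].
    have -> : k = k' by apply: val_inj; apply: cyc_self; exact: h1 (ltn_ord k).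
    by have -> : l = l' by apply: val_inj; apply: cyc_self; exact: h2 (ltn_ord l).
  by have := h1 _ (ltn_ord k'); rewrite cyc_r.
have := leq_card g ginj; rewrite card_prod !card_ord hPn => hc.
rewrite -/P -[P]gez0_abs ?lez_nat //; exact: Order.POrderTheory.ltW hP.
Qed.

Lemma seq_prodS k (c : nat -> int) d :
  seq_prod k.+1 c d = seq_prod k c d ++ nseq (d k) (c k).
Proof. by rewrite /seq_prod -addn1 iotaD map_cat flatten_cat /= cats0. Qed.

Lemma sum_nseq_int (c : int) t : seq_sum (nseq t c) = c * t%:Z.
Proof.
elim: t => [|t IH]; first by rewrite /seq_sum big_nil mulr0.
rewrite /seq_sum /= big_cons -/(seq_sum _) IH intS; ring.
Qed.

Lemma size_seq_prod k (c : nat -> int) d : size (seq_prod k c d) = (\sum_(i < k) d i)%N.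
Proof.
elim: k => [|k IH]; first by rewrite big_ord0.
by rewrite seq_prodS size_cat size_nseq IH big_ord_recr.
Qed.

Lemma sum_seq_prod k (c : nat -> nat) d :
  seq_sum (seq_prod k (fun i => (c i)%:Z) d) = (\sum_(i < k) c i * d i)%N%:Z.
Proof.
elim: k => [|k IH]; first by rewrite big_ord0 /seq_sum /seq_prod /= big_nil.
by rewrite seq_prodS seq_sum_cat IH sum_nseq_int big_ord_recr /= PoszD PoszM.
Qed.

Lemma sum_seq_prodN k (c : nat -> nat) d :
  seq_sum (seq_prod k (fun i => - (c i)%:Z) d) = - (\sum_(i < k) c i * d i)%N%:Z.
Proof.
elim: k => [|k IH]; first by rewrite big_ord0 oppr0 /seq_sum /seq_prod /= big_nil.
rewrite seq_prodS seq_sum_cat IH sum_nseq_int big_ord_recr /= PoszD PoszM; ring.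
Qed.

Lemma all_seq_prod k (c : nat -> int) d (P : pred int) :
  (forall i, (i < k)%N -> P (c i)) -> all P (seq_prod k c d).
Proof.
elim: k => [|k IH] h //.
rewrite seq_prodS all_cat IH; last by move=> i hi; apply: h; lia.
rewrite all_nseq h ?orbT //.
Qed.

Lemma sum_ge (s : seq int) : all (fun z => 0 < z) s -> (size s)%:Z <= seq_sum s.
Proof.
elim: s => [|z s IH] /=; first by rewrite /seq_sum big_nil.
case/andP=> hz /IH h; rewrite /seq_sum big_cons -/(seq_sum s); lia.
Qed.

Lemma sum_le (s : seq int) : all (fun z => z < 0) s -> seq_sum s <= - (size s)%:Z.
Proof.
elim: s => [|z s IH] /=; first by rewrite /seq_sum big_nil.
case/andP=> hz /IH h; rewrite /seq_sum big_cons -/(seq_sum s); lia.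
Qed.

Theorem theorem1p3 (n m : nat) (a x b y : nat -> nat) (S : seq int) :
  (forall i, (i < n)%N -> (0 < a i)%N) ->
  (forall i j, (i <= j < n)%N -> (a i <= a j)%N) ->
  (forall j, (j < m)%N -> (0 < b j)%N) ->
  (forall i j, (i <= j < m)%N -> (b i <= b j)%N) ->
  (forall i, (i < n)%N -> (0 < x i)%N) ->
  (forall j, (j < m)%N -> (0 < y j)%N) ->
  S = seq_prod n (fun i => (a i)%:Z) x ++ seq_prod m (fun j => - (b j)%:Z)%R y ->
  minimal_zero_sum S ->
  (1 < size S)%N ->
  (size (seq_prod n (fun i => (a i)%:Z) x)
     <= (\sum_(j < m) b j * y j) %/ (\sum_(j < m) y j))%N /\
  (size (seq_prod m (fun j => - (b j)%:Z)%R y)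
     <= (\sum_(i < n) a i * x i) %/ (\sum_(i < n) x i))%N.
Proof.
move=> ha _ hb _ _ _ hS hmin hsz.
have hpos : all (fun z => 0 < z) (seq_prod n (fun i => (a i)%:Z) x).
  by apply: all_seq_prod => i hi; rewrite ltz_nat; apply: ha.
have hneg : all (fun z => z < 0) (seq_prod m (fun j => - (b j)%:Z) y).
  by apply: all_seq_prod => i hi; rewrite oppr_lt0 ltz_nat; apply: hb.
have hmin' := hmin; rewrite hS in hmin'.
have hz : seq_sum S = 0 by case: hmin.
move: hz; rewrite hS seq_sum_cat => hz.
have hg := sum_ge _ hpos; have hl := sum_le _ hneg.
have h0p : size (seq_prod n (fun i => (a i)%:Z) x) = 0%N ->
  seq_sum (seq_prod n (fun i => (a i)%:Z) x) = 0 by move/size0nil ->; rewrite /seq_sum big_nil.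
have h0n : size (seq_prod m (fun j => - (b j)%:Z) y) = 0%N ->
  seq_sum (seq_prod m (fun j => - (b j)%:Z) y) = 0 by move/size0nil ->; rewrite /seq_sum big_nil.
move: hz hg hl hsz h0p h0n.
rewrite hS size_cat.
have hk := key _ _ hpos hneg hmin'.
move: hk.
rewrite !size_seq_prod sum_seq_prod sum_seq_prodN.
set X := (\sum_(i < n) x i)%N; set Y := (\sum_(j < m) y j)%N.
set A := (\sum_(i < n) a i * x i)%N; set B := (\sum_(j < m) b j * y j)%N.
move=> hk hz hg hl hsz h0p h0n.
have hX : (0 < X)%N.
  case: (posnP X) => // hX0; have := h0p hX0; lia.
have hY : (0 < Y)%N.
  case: (posnP Y) => // hY0; have := h0n hY0; lia.
have hAB : A = B by lia.
have hXY : (X * Y <= A)%N by move: (hk hX); rewrite lez_nat.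
rewrite !leq_divRL //; split; [rewrite -hAB | rewrite mulnC]; exact: hXY.
Qed.
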